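(* Let $g:\mathbb{R}^m\to\overline{\mathbb{R}}$ be a polyhedral function and $(\bar z,\bar\lambda)\in\mathrm{gph}\,\partial g$. Then its strict second subderivative is $${\rm d}_s^2 g(\bar z,\bar\lambda)(w)=\delta_{K_g(\bar z,\bar\lambda)-K_g(\bar z,\bar\lambda)}(w)\quad\text{for all } w\in\mathbb{R}^m.$$
   Context: A proper function $g:\mathbb{R}^m\to\overline{\mathbb{R}}$ is polyhedral if its epigraph is a polyhedral convex set; $\partial g$ is the convex-analysis subdifferential; $\delta_C$ is the indicator function of $C$. For $z$ with $g(z)$ finite, ${\rm d} g(z)(w)=\liminf_{t\searrow 0,\,w'\to w}\frac{g(z+tw')-g(z)}{t}$ and for $\lambda\in\partial g(z)$ the critical cone is $K_g(z,\lambda)=\{w\mid\langle\lambda,w\rangle={\rm d} g(z)(w)\}$. For $f:\mathbb{R}^n\to\overline{\mathbb{R}}$, $f(x)$ finite, $v\in\partial f(x)$ and $t>0$, the second-order difference quotient is $\Delta_t^2 f(x,v)(w)=\frac{f(x+tw)-f(x)-t\langle v,w\rangle}{\frac12 t^2}$. The strict second subderivative at $\bar x$ for $\bar v\in\partial f(\bar x)$ is ${\rm d}_s^2 f(\bar x,\bar v)(w)=\liminf \Delta_t^2 f(x,v)(w')$, the liminf taken as $t\searrow0$, $w'\to w$, $(x,v)\to(\bar x,\bar v)$ with $(x,v)\in\mathrm{gph}\,\partial f$ and $f(x)\to f(\bar x)$. *)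

(* Defs.v *)
From HB Require Import structures.
From mathcomp Require Import all_boot all_order all_algebra.
From mathcomp Require Import all_classical all_reals all_analysis.
Set Implicit Arguments. Unset Strict Implicit. Unset Printing Implicit Defensive.
Import Order.TTheory GRing.Theory Num.Theory.
Import numFieldNormedType.Exports.
Local Open Scope classical_set_scope.
Local Open Scope ring_scope.

Section Defs.
Variables (R : realType) (m : nat).
Implicit Types (g : 'rV[R]_m -> \bar R) (x z w v : 'rV[R]_m).

Definition dotv (u v : 'rV[R]_m) : R := \sum_(i < m) u ord0 i * v ord0 i.

Definition proper_fun g : Prop :=
  (forall x, g x != -oo%E) /\ exists x, g x \is a fin_num.

Definition epigraph g : set ('rV[R]_m * R) := [set p | (g p.1 <= p.2%:E)%E].

Definition polyhedral_set (C : set ('rV[R]_m * R)) : Prop :=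
  exists (k : nat) (A : 'I_k -> 'rV[R]_m) (c b : 'I_k -> R),
    C = [set p | forall i, dotv (A i) p.1 + c i * p.2 <= b i].

Definition polyhedral_fun g : Prop := proper_fun g /\ polyhedral_set (epigraph g).

Definition subdiff g x v : Prop :=
  g x \is a fin_num /\ forall y, (g x + (dotv v (y - x))%:E <= g y)%E.

(* liminf_{t \searrow 0, w' -> w} (g(z + t w') - g(z)) / t *)
Definition subderiv g z w : \bar R :=
  ereal_sup [set ereal_inf
    [set ((g (z + t *: w')%R - g z) * (t^-1)%:E)%E
       | t in [set t : R | 0 < t < e] & w' in [set w' | `|w' - w| < e]]
    | e in [set e : R | 0 < e]].

Definition crit_cone g z lam : set 'rV[R]_m :=
  [set w | (dotv lam w)%:E = subderiv g z w].

Definition diffquot2 g x v t w : \bar R :=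
  ((g (x + t *: w)%R - g x - (t * dotv v w)%:E) * ((t ^+ 2 / 2)^-1)%:E)%E.

(* strict second subderivative: liminf of diffquot2 g x v t w' as t \searrow 0,
   w' -> w, (x,v) -> (xb,vb) with v \in \partial g(x), g(x) -> g(xb) *)
Definition strict_second_subderiv g xb vb w : \bar R :=
  ereal_sup [set ereal_inf
    [set q | exists (x v w' : 'rV[R]_m) (t : R),
        [/\ 0 < t < e, `|w' - w| < e, `|x - xb| < e & `|v - vb| < e] /\
        [/\ subdiff g x v, `|fine (g x) - fine (g xb)| < e
          & q = diffquot2 g x v t w']]
    | e in [set e : R | 0 < e]].

Definition indicator (C : set 'rV[R]_m) (w : 'rV[R]_m) : \bar R :=
  if `[< C w >] then 0%E else +oo%E.

Definition set_minus_self (C : set 'rV[R]_m) : set 'rV[R]_m :=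
  [set u - u' | u in C & u' in C].

End Defs.

(* Main.v *)
Require Import Defs.
From HB Require Import structures.
From mathcomp Require Import all_boot all_order all_algebra.
From mathcomp Require Import all_classical all_reals all_analysis.
From mathcomp Require Import ring lra.
Import Order.TTheory GRing.Theory Num.Theory.
Import numFieldNormedType.Exports.
Local Open Scope classical_set_scope.
Local Open Scope ring_scope.

Lemma fin_small (R : realType) (I : finType) (P : I -> R -> Prop) :
  (forall i, exists2 e, 0 < e & forall t, 0 < t -> t < e -> P i t) ->
  exists2 e, 0 < e & forall t, 0 < t -> t < e -> forall i, P i t.
Proof.
move=> h.
have [f hf] := @choice I R (fun i e => 0 < e /\ forall t, 0 < t -> t < e -> P i t)
  (fun i => match h i with ex_intro2 e e0 He => ex_intro _ e (conj e0 He) end).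
exists (\big[Order.min/1]_i f i).
  apply: (big_ind (fun x => 0 < x)) => //.
    by move=> x y x0 y0; rewrite lt_min x0 y0.
  by move=> i _; case: (hf i).
move=> t t0 te i; case: (hf i) => _ Hi; apply: Hi => //.
by apply: (lt_le_trans te); apply: bigmin_le.
Qed.

Lemma dotvDr (R : realType) m (u v w : 'rV[R]_m) :
  dotv u (v + w) = dotv u v + dotv u w.
Proof. by rewrite /dotv -big_split /=; apply: eq_bigr => i _; rewrite mxE mulrDr. Qed.

Lemma dotvDl (R : realType) m (u v w : 'rV[R]_m) :
  dotv (v + w) u = dotv v u + dotv w u.
Proof. by rewrite /dotv -big_split /=; apply: eq_bigr => i _; rewrite mxE mulrDl. Qed.

Lemma dotvZr (R : realType) m (a : R) (u v : 'rV[R]_m) :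
  dotv u (a *: v) = a * dotv u v.
Proof. by rewrite /dotv mulr_sumr; apply: eq_bigr => i _; rewrite mxE mulrCA. Qed.

Lemma dotvZl (R : realType) m (a : R) (u v : 'rV[R]_m) :
  dotv (a *: u) v = a * dotv u v.
Proof. rewrite /dotv mulr_sumr; apply: eq_bigr => i _; by rewrite !mxE mulrA. Qed.

Lemma dotvNr (R : realType) m (u v : 'rV[R]_m) : dotv u (- v) = - dotv u v.
Proof. by rewrite -scaleN1r dotvZr mulN1r. Qed.

Lemma dotvBr (R : realType) m (u v w : 'rV[R]_m) :
  dotv u (v - w) = dotv u v - dotv u w.
Proof. by rewrite dotvDr dotvNr. Qed.

Lemma dotvNl (R : realType) m (u v : 'rV[R]_m) : dotv (- u) v = - dotv u v.
Proof. by rewrite -scaleN1r dotvZl mulN1r. Qed.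

Lemma dotvBl (R : realType) m (u v w : 'rV[R]_m) :
  dotv (v - w) u = dotv v u - dotv w u.
Proof. by rewrite dotvDl dotvNl. Qed.

Lemma dotv0r (R : realType) m (u : 'rV[R]_m) : dotv u 0 = 0.
Proof. by rewrite -(scale0r (0 : 'rV[R]_m)) dotvZr mul0r. Qed.

Lemma entry_le_norm (R : realType) m (u : 'rV[R]_m) i : `|u ord0 i| <= `|u|.
Proof.
rewrite [X in _ <= X]/Num.norm /= mx_normrE.
exact: (le_bigmax _ (fun ij : 'I_1 * 'I_m => `|u ij.1 ij.2|) (ord0, i)).
Qed.

Lemma dotv_bound (R : realType) m (u v : 'rV[R]_m) :
  `|dotv u v| <= m%:R * `|u| * `|v|.
Proof.
rewrite /dotv; apply: (le_trans (ler_norm_sum _ _ _)).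
have -> : m%:R * `|u| * `|v| = \sum_(i < m) (`|u| * `|v|).
  by rewrite sumr_const card_ord -mulrA mulr_natl.
apply: ler_sum => i _; rewrite normrM.
by apply: ler_pM => //; apply: entry_le_norm.
Qed.
Definition linf {R : realType} {V : lmodType R} (f : V -> R) :=
  forall x y (al : R), f (x - al *: y) = f x - al * f y.

Lemma linf0 {R : realType} {V : lmodType R} (f : V -> R) : linf f -> f 0 = 0.
Proof. by move=> h; have := h 0 0 1; rewrite scale1r subrr mul1r subrr. Qed.

Lemma linfN {R : realType} {V : lmodType R} (f : V -> R) x : linf f -> f (- x) = - f x.
Proof. by move=> h; have := h 0 x 1; rewrite scale1r sub0r mul1r (linf0 _ h) sub0r. Qed.

Lemma farkas (R : realType) (V : lmodType R) (n : nat) :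
  forall (a : nat -> V -> R) (b : V -> R),
  (forall i, linf (a i)) -> linf b ->
  (forall x, (forall i, (i < n)%N -> 0 <= a i x) -> 0 <= b x) ->
  exists mu : nat -> R, (forall i, 0 <= mu i) /\
    forall x, b x = \sum_(i < n) mu i * a i x.
Proof.
elim: n => [|n IH] a b la lb h.
  exists (fun _ => 0); split=> // x; rewrite big_ord0.
  apply/eqP; rewrite eq_le; apply/andP; split; last by apply: h.
  have := h (- x) (fun i (hi : (i < 0)%N) => False_ind _ (notF hi)).
  by rewrite (linfN _ _ lb) oppr_ge0.
case: (pselect (forall x, (forall i, (i < n)%N -> 0 <= a i x) -> 0 <= b x)) => [h'|h'].
  have [mu [mu0 Hmu]] := IH a b la lb h'.
  exists (fun i => if (i < n)%N then mu i else 0); split.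
    by move=> i; case: ifP.
  move=> x; rewrite big_ord_recr /= ltnn mul0r addr0 Hmu.
  by apply: eq_bigr => i _; rewrite /= ltn_ord.
have [x0 Hx0] : exists x0, ~ ((forall i, (i < n)%N -> 0 <= a i x0) -> 0 <= b x0).
  by apply/existsNP.
move/not_implyP: Hx0 => [Ha0 Hb0].
have bx0 : b x0 < 0 by rewrite ltNge; apply/negP.
set an := a n x0.
have an0 : an < 0.
  rewrite ltNge; apply/negP => an0; apply: Hb0; apply: h => i.
  by rewrite ltnS leq_eqVlt => /orP[/eqP->//|/Ha0].
have an0' : an != 0 by rewrite lt_eqF.
pose a' i x := a i x - (a i x0 / an) * a n x.
pose b' x := b x - (b x0 / an) * a n x.
have la' : forall i, linf (a' i).
  move=> i x y al; rewrite /a' !la; ring.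
have lb' : linf b'.
  move=> x y al; rewrite /b' lb la; ring.
have h2 : forall x, (forall i, (i < n)%N -> 0 <= a' i x) -> 0 <= b' x.
  move=> x hx.
  pose y := x - (a n x / an) *: x0.
  have ay : forall i, a i y = a' i x.
    by move=> j; rewrite /y la /a'; congr (_ - _); rewrite mulrAC [RHS]mulrAC [a n x * _]mulrC.
  have any : a n y = 0 by rewrite /y la /an divfK // subrr.
  have : 0 <= b y.
    apply: h => i; rewrite ltnS leq_eqVlt => /orP[/eqP->|hi].
      by rewrite any.
    by rewrite ay; apply: hx.
  by rewrite /y lb /b'; congr (0 <= _ - _); rewrite mulrAC [RHS]mulrAC [a n x * _]mulrC.
have [mu [mu0 Hmu]] := IH a' b' la' lb' h2.
set S0 := \sum_(i < n) mu i * a i x0.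
have S0ge : 0 <= S0 by apply: sumr_ge0 => i _; apply: mulr_ge0 => //; apply: Ha0.
pose ka := (b x0 - S0) / an.
have ka0 : 0 <= ka.
  rewrite /ka -mulrNN -invrN; apply: divr_ge0; last by rewrite oppr_ge0 ltW.
  by rewrite opprB subr_ge0; apply: (le_trans (ltW bx0)).
exists (fun i => if (i < n)%N then mu i else ka); split.
  by move=> i; case: ifP.
move=> x; rewrite big_ord_recr /= ltnn.
have -> : \sum_(i < n) (if (widen_ord (leqnSn n) i < n)%N then mu (widen_ord (leqnSn n) i) else ka) * a (widen_ord (leqnSn n) i) x
   = \sum_(i < n) mu i * a i x by apply: eq_bigr => i _; rewrite /= ltn_ord.
have e1 : b x = b' x + (b x0 / an) * a n x by rewrite /b' subrK.
rewrite e1 Hmu /a'.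
have -> : \sum_(i < n) mu i * (a i x - a i x0 / an * a n x)
   = \sum_(i < n) mu i * a i x - S0 / an * a n x.
  rewrite /S0 mulr_suml mulr_suml -sumrB; apply: eq_bigr => j _; ring.
by rewrite /ka; ring.
Qed.
Definition epirep {R : realType} {m k : nat} (A : 'I_k -> 'rV[R]_m) (c b : 'I_k -> R)
  (g : 'rV[R]_m -> \bar R) :=
  forall y (a : R), (g y <= a%:E)%E <-> (forall i, dotv (A i) y + c i * a <= b i).

Lemma epi_of_poly (R : realType) m (g : 'rV[R]_m -> \bar R) :
  polyhedral_fun g -> exists k (A : 'I_k -> 'rV[R]_m) (c b : 'I_k -> R), epirep A c b g.
Proof.
move=> [_ [k [A [c [b hE]]]]]; exists k, A, c, b => y a.
have := congr1 (fun S => S (y, a)) hE; rewrite /epigraph /= => ->.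
by [].
Qed.

Lemma ratio_lt (R : realType) (X : \bar R) (z q y : R) : 0 < q -> X != -oo%E ->
  ((X - z%:E) * (q^-1)%:E < y%:E)%E -> exists a, X = a%:E /\ a < z + q * y.
Proof.
move=> q0; case: X => [a _| _ |//].
  rewrite -EFinD -EFinM lte_fin => h; exists a; split => //.
  by rewrite -ltrBlDl mulrC -ltr_pdivrMr.
by rewrite /= gt0_mulye ?lte_fin ?invr_gt0.
Qed.

Arguments dotvDr {R m}. Arguments dotvDl {R m}. Arguments dotvZr {R m}.
Arguments dotvZl {R m}. Arguments dotvNr {R m}. Arguments dotvBr {R m}.
Arguments dotvNl {R m}. Arguments dotvBl {R m}. Arguments dotv0r {R m}.
Arguments entry_le_norm {R m}. Arguments dotv_bound {R m}.
Arguments epi_of_poly {R m g}.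

Set Implicit Arguments. Unset Strict Implicit.
Lemma feasible_step (R : realType) m k (A : 'I_k -> 'rV[R]_m) (c b : 'I_k -> R)
  (g : 'rV[R]_m -> \bar R) (x u : 'rV[R]_m) (r : R) :
  epirep A c b g -> g x \is a fin_num ->
  (forall i, dotv (A i) x + c i * fine (g x) = b i -> dotv (A i) u + c i * r <= 0) ->
  exists2 tau, 0 < tau & forall th, 0 < th -> th < tau ->
    (g (x + th *: u)%R <= (fine (g x) + th * r)%:E)%E.
Proof.
move=> Hepi gxf Hh.
set gx := fine (g x).
have gxE : g x = gx%:E by rewrite fineK.
have Hx : forall i, dotv (A i) x + c i * gx <= b i by apply/Hepi; rewrite gxE.
have H : forall i, exists2 e, 0 < e & forall th, 0 < th -> th < e ->
   dotv (A i) x + c i * gx + th * (dotv (A i) u + c i * r) <= b i; last first.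
  have [tau tau0 Ht] := @fin_small R _ _ H.
  exists tau => // th th0 tht; apply/Hepi => i.
  have := Ht th th0 tht i; rewrite dotvDr dotvZr.
  have -> : dotv (A i) x + th * dotv (A i) u + c i * (gx + th * r) = 
     dotv (A i) x + c i * gx + th * (dotv (A i) u + c i * r) by ring.
  by [].
move=> i.
set s0 := dotv (A i) x + c i * gx; set q := dotv (A i) u + c i * r.
case: (eqVneq s0 (b i)) => [hs | hs].
  exists 1 => // th th0 _; have := Hh i hs; rewrite -/q => hq.
  have : th * q <= 0 by rewrite pmulr_rle0.
  rewrite -hs; lra.
have lt : s0 < b i by rewrite lt_neqAle hs Hx.
exists ((b i - s0) / (`|q| + 1)).
  by apply: divr_gt0; [lra | rewrite ltr_wpDl].
move=> th th0; rewrite ltr_pdivlMr; last by rewrite ltr_wpDl.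
have : th * q <= th * `|q|.
  by apply: ler_wpM2l; [exact: ltW | exact: ler_norm].
move=> h1 h2; have : th * (`|q| + 1) = th * `|q| + th by ring.
lra.
Qed.

Lemma subgrad_active (R : realType) m k (A : 'I_k -> 'rV[R]_m) (c b : 'I_k -> R)
  (g : 'rV[R]_m -> \bar R) (x v u : 'rV[R]_m) (r : R) :
  epirep A c b g -> subdiff g x v ->
  (forall i, dotv (A i) x + c i * fine (g x) = b i -> dotv (A i) u + c i * r <= 0) ->
  dotv v u <= r.
Proof.
move=> Hepi [gxf Hs] Hh.
have [tau tau0 Ht] := feasible_step Hepi gxf Hh.
have th0 : 0 < tau / 2 by rewrite divr_gt0.
have lt2 : tau / 2 < tau by lra.
have h1 := Ht _ th0 lt2.
have := le_trans (Hs (x + (tau / 2) *: u)) h1.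
rewrite -(fineK gxf) -EFinD lee_fin addrAC subrr add0r dotvZr lerD2l.
by rewrite ler_pM2l.
Qed.

Lemma div_bound (R : realType) (X e n : R) : 0 <= X -> 0 <= e -> 0 < n ->
  X * (e / (n * (X + 1))) <= e / n.
Proof.
move=> X0 e0 n0.
have X1 : 0 < X + 1 by lra.
have -> : X * (e / (n * (X + 1))) = e / n * (X / (X + 1)).
  by field; rewrite (gt_eqF X1) (gt_eqF n0).
apply: ler_piMr; first by rewrite divr_ge0 // ltW.
by rewrite ler_pdivrMr // mul1r; lra.
Qed.

Definition I0 (R : realType) m k (A : 'I_k -> 'rV[R]_m) (c b : 'I_k -> R)
  (g : 'rV[R]_m -> \bar R) zb i := dotv (A i) zb + c i * fine (g zb) = b i.

Definition Kp (R : realType) m k (A : 'I_k -> 'rV[R]_m) (c b : 'I_k -> R)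
  (g : 'rV[R]_m -> \bar R) zb (lamb : 'rV[R]_m) : set 'rV[R]_m :=
  [set u | forall i, I0 A c b g zb i -> dotv (A i + c i *: lamb) u <= 0].

Lemma dotvG (R : realType) m (a l u : 'rV[R]_m) (s : R) :
  dotv (a + s *: l) u = dotv a u + s * dotv l u.
Proof. by rewrite dotvDl dotvZl. Qed.

Lemma ray_exact (R : realType) m k (A : 'I_k -> 'rV[R]_m) (c b : 'I_k -> R)
  (g : 'rV[R]_m -> \bar R) zb lamb u :
  epirep A c b g -> subdiff g zb lamb -> Kp A c b g zb lamb u ->
  exists2 tau, 0 < tau & forall t, 0 < t -> t < tau ->
    g (zb + t *: u)%R = (fine (g zb) + t * dotv lamb u)%:E.
Proof.
move=> Hepi [gzf Hs] Hu.
have Hu' : forall i, dotv (A i) zb + c i * fine (g zb) = b i ->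
    dotv (A i) u + c i * dotv lamb u <= 0.
  by move=> i hi; have := Hu i hi; rewrite dotvG.
have [tau tau0 Ht] := feasible_step Hepi gzf Hu'.
exists tau => // t t0 tt.
apply/le_anti/andP; split; first exact: Ht.
have := Hs (zb + t *: u); rewrite -(fineK gzf) addrAC subrr add0r dotvZr.
by rewrite EFinD.
Qed.


Lemma approx_le (R : realType) (r : R) (X : \bar R) :
  (forall eps, 0 < eps -> ((r - eps)%:E <= X)%E) -> (r%:E <= X)%E.
Proof.
case: X => [s | | ] h.
- rewrite lee_fin leNgt; apply/negP => hs.
  have := h ((r - s) / 2); rewrite lee_fin; lra.
- exact: leey.
- by have := h 1 ltr01.
Qed.

Lemma crit_sub (R : realType) m k (A : 'I_k -> 'rV[R]_m) (c b : 'I_k -> R)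
  (g : 'rV[R]_m -> \bar R) zb lamb u :
  epirep A c b g -> (forall x, g x != -oo%E) -> subdiff g zb lamb ->
  crit_cone g zb lamb u -> Kp A c b g zb lamb u.
Proof.
move=> Hepi Hnm [gzf Hs] Hc i Ii; rewrite dotvG.
set r := dotv lamb u.
rewrite leNgt; apply/negP => eta0.
set eta := dotv (A i) u + c i * r in eta0.
pose eps := eta / (3 * (`|c i| + 1)).
pose del := eta / (3 * (m%:R * `|A i| + 1)).
have eps0 : 0 < eps by rewrite divr_gt0 // mulr_gt0 // ltr_wpDl.
have del0 : 0 < del by rewrite divr_gt0 // mulr_gt0 // ltr_wpDl // mulr_ge0.
have key : ((r + eps)%:E <= subderiv g zb u)%E.
  rewrite /subderiv; apply: le_trans; last first.
    by apply: ereal_sup_ubound; exists del.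
  apply/ereal_infP => y [t /andP[t0 tdel] [w' hw' <-]].
  rewrite leNgt; apply/negP.
  rewrite -(fineK gzf) => /(@ratio_lt _ _ _ _ _ t0 (Hnm _)) [a [ga alt]].
  have : (g (zb + t *: w')%R <= (fine (g zb) + t * (r + eps))%:E)%E.
    by rewrite ga lee_fin ltW.
  move/Hepi/(_ i); rewrite dotvDr dotvZr.
  rewrite /I0 in Ii => hi.
  have hc : t * (dotv (A i) w' + c i * (r + eps)) <= 0.
    have -> : t * (dotv (A i) w' + c i * (r + eps)) =
      (dotv (A i) zb + t * dotv (A i) w' + c i * (fine (g zb) + t * (r + eps)))
      - (dotv (A i) zb + c i * fine (g zb)) by ring.
    by rewrite Ii subr_le0.
  rewrite pmulr_rle0 // in hc.
  have hb := dotv_bound (A i) (w' - u).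
  rewrite dotvBr in hb.
  have hb2 : m%:R * `|A i| * `|w' - u| <= eta / 3.
    apply: le_trans (div_bound _ _ _); last by [].
    - by apply: ler_wpM2l; [rewrite mulr_ge0 | apply: ltW].
    - by rewrite mulr_ge0.
    - exact: ltW.
  have hb3 : `|c i| * eps <= eta / 3 by apply: div_bound => //; exact: ltW.
  have hb4 : - (`|c i| * eps) <= c i * eps.
    have : `|c i * eps| = `|c i| * eps by rewrite normrM (gtr0_norm eps0).
    move=> <-; rewrite lerNl -normrN; exact: ler_norm.
  have hb5 := le_trans hb hb2.
  move: hb5; rewrite ler_norml => /andP[h1 h2].
  have : eta = dotv (A i) u + c i * r by [].
  have : c i * (r + eps) = c i * r + c i * eps by ring.
  lra.
rewrite /crit_cone /= in Hc; rewrite -Hc lee_fin in key.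
have : r = dotv lamb u by []. lra.
Qed.

Lemma crit_sup (R : realType) m k (A : 'I_k -> 'rV[R]_m) (c b : 'I_k -> R)
  (g : 'rV[R]_m -> \bar R) zb lamb u :
  epirep A c b g -> (forall x, g x != -oo%E) -> subdiff g zb lamb ->
  Kp A c b g zb lamb u -> crit_cone g zb lamb u.
Proof.
move=> Hepi Hnm Hsub Hu; have [gzf Hs] := Hsub.
rewrite /crit_cone /=; set r := dotv lamb u.
apply/le_anti/andP; split.
  apply: approx_le => eps eps0.
  pose del := eps / (1 * (m%:R * `|lamb| + 1)).
  have del0 : 0 < del by rewrite divr_gt0 // mulr_gt0 // ltr_wpDl // mulr_ge0.
  rewrite /subderiv; apply: le_trans; last first.
    by apply: ereal_sup_ubound; exists del.
  apply/ereal_infP => y [t /andP[t0 tdel] [w' hw' <-]].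
  rewrite leNgt; apply/negP.
  rewrite -(fineK gzf) => /(@ratio_lt _ _ _ _ _ t0 (Hnm _)) [a [ga alt]].
  have := Hs (zb + t *: w'); rewrite ga -(fineK gzf) addrAC subrr add0r dotvZr.
  rewrite -EFinD lee_fin => hle.
  have hb := dotv_bound lamb (w' - u).
  rewrite dotvBr in hb.
  have hb2 : m%:R * `|lamb| * `|w' - u| <= eps / 1.
    apply: le_trans (div_bound _ _ _); last by [].
    - by apply: ler_wpM2l; [rewrite mulr_ge0 | apply: ltW].
    - by rewrite mulr_ge0.
    - exact: ltW.
  have hb5 := le_trans hb hb2.
  move: hb5; rewrite divr1 ler_norml => /andP[h1 h2].
  have : t * (r - eps) <= t * dotv lamb w'.
    by rewrite ler_pM2l //; rewrite /r; lra.
  lra.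
apply/ereal_supP => y [e e0 <-].
have [tau tau0 Ht] := ray_exact Hepi Hsub Hu.
pose t := Order.min e tau / 2.
have mt0 : 0 < Order.min e tau by rewrite lt_min e0 tau0.
have t0 : 0 < t by rewrite divr_gt0.
have te : t < e by apply: (lt_le_trans (y := Order.min e tau)); [rewrite /t; lra | rewrite ge_min lexx].
have tt : t < tau by apply: (lt_le_trans (y := Order.min e tau)); [rewrite /t; lra | rewrite ge_min lexx orbT].
apply: le_trans; first apply: ereal_inf_lbound.
  exists t; first by rewrite /= t0 te.
  exists u; first by rewrite /= subrr normr0.
  reflexivity.
rewrite Ht // -(fineK gzf) -EFinB -EFinM lee_fin.
have -> : (fine (g zb) + t * r - fine (g zb)) * t^-1 = r.
  by field; rewrite gt_eqF.
by [].
Qed.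


Lemma dotv_sumr (R : realType) m (I : finType) (a : 'rV[R]_m) (F : I -> 'rV[R]_m) :
  dotv a (\sum_i F i) = \sum_i dotv a (F i).
Proof. by apply: (big_morph _ (dotvDr a) (dotv0r a)). Qed.

Lemma cone_span (R : realType) m k (G : 'I_k -> 'rV[R]_m) (P : 'I_k -> Prop)
  (w : 'rV[R]_m) :
  let K := [set u | forall i, P i -> dotv (G i) u <= 0] in
  (exists2 u1, K u1 & exists2 u2, K u2 & u1 - u2 = w) \/
  (exists j, [/\ P j, (forall u, K u -> dotv (G j) u = 0) & 0 < dotv (G j) w]).
Proof.
move=> K.
case: (pselect (exists j, [/\ P j, (forall u, K u -> dotv (G j) u = 0) & 0 < dotv (G j) w])) => [h|h]; [by right|left].
have hw : forall j, P j -> (forall u, K u -> dotv (G j) u = 0) -> dotv (G j) w <= 0.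
  move=> j Pj Hj; rewrite leNgt; apply/negP => hpos; apply: h; exists j; split => //.
have K0 : K 0 by move=> i _; rewrite dotv0r.
have hc : forall i, exists u, K u /\ ((exists u', K u' /\ dotv (G i) u' < 0) -> dotv (G i) u < 0).
  move=> i; case: (pselect (exists u', K u' /\ dotv (G i) u' < 0)) => [[u' [Ku' hu']]|hn].
    by exists u'; split => // _.
  by exists 0; split => // hex; exfalso; apply: hn.
have [f hf] := choice hc.
pose u0 := \sum_i f i.
have Gu0 : forall i, dotv (G i) u0 = \sum_l dotv (G i) (f l) by move=> i; rewrite dotv_sumr.
have Ku0 : K u0.
  move=> i Pi; rewrite Gu0; apply: sumr_le0 => l _.
  by case: (hf l) => Kl _; apply: Kl.
have u0le : forall i, P i -> dotv (G i) u0 <= dotv (G i) (f i).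
  move=> i Pi; rewrite Gu0 (bigD1 i) //=; apply: ler_wnDr => //.
  apply: sumr_le0 => l _; by case: (hf l) => Kl _; apply: Kl.
pose s := \sum_q `|dotv (G q) w| / `|dotv (G q) u0|.
have s0 : 0 <= s by apply: sumr_ge0 => q _; rewrite divr_ge0.
have sge : forall q, `|dotv (G q) w| / `|dotv (G q) u0| <= s.
  move=> q; rewrite /s (bigD1 q) //=; apply: ler_wpDr => //.
  by apply: sumr_ge0 => l _; rewrite divr_ge0.
exists (w + s *: u0); last first.
  exists (s *: u0); last by rewrite addrK.
  move=> i Pi; rewrite dotvZr; apply: mulr_ge0_le0 => //; exact: Ku0.
move=> i Pi; rewrite dotvDr dotvZr.
set a := dotv (G i) w; set d := dotv (G i) u0.
have d0 : d <= 0 by exact: Ku0.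
case: (ltgtP d 0) => [dlt | dgt | deq].
- have := sge i; rewrite -/a -/d ler_pdivrMr; last by rewrite normr_gt0 lt_eqF.
  rewrite (ltr0_norm dlt) => h1.
  have : a <= `|a| by exact: ler_norm.
  have : s * - d = - (s * d) by ring.
  lra.
- lra.
- have : a <= 0.
    apply: hw => // u Ku; apply/eqP; rewrite eq_le Ku //=.
    rewrite leNgt; apply/negP => hlt.
    have : dotv (G i) (f i) < 0.
      by case: (hf i) => _; apply; exists u; split.
    have := u0le i Pi; rewrite -/d deq; lra.
  by rewrite deq mulr0 addr0.
Qed.

Lemma dq_ge0 (R : realType) m (g : 'rV[R]_m -> \bar R) x v t w :
  subdiff g x v -> 0 < t -> (0 <= diffquot2 g x v t w)%E.
Proof.
move=> [gxf Hs] t0; rewrite /diffquot2.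
have := Hs (x + t *: w); rewrite addrAC subrr add0r dotvZr -(fineK gxf).
have q0 : 0 < (t ^+ 2 / 2)^-1 by rewrite invr_gt0 divr_gt0 // exprn_gt0.
case: (g (x + t *: w)%R) => [a | | ] /=.
- rewrite -EFinD lee_fin => h.
  rewrite -EFinM lee_fin; apply: mulr_ge0; [lra | exact: ltW].
- by rewrite gt0_mulye ?lte_fin.
- by [].
Qed.

Lemma dq_lt (R : realType) m (g : 'rV[R]_m -> \bar R) x v t w (M : R) :
  subdiff g x v -> 0 < t -> g (x + t *: w)%R != -oo%E ->
  (diffquot2 g x v t w < M%:E)%E ->
  exists a, g (x + t *: w)%R = a%:E /\
    a < fine (g x) + t * dotv v w + (t ^+ 2 / 2) * M.
Proof.
move=> [gxf Hs] t0; rewrite /diffquot2.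
set gx := fine (g x); have gxE : g x = gx%:E by rewrite fineK.
rewrite gxE.
have q0 : 0 < t ^+ 2 / 2 by rewrite divr_gt0 // exprn_gt0.
case: (g (x + t *: w)%R) => [a | | ] //= _.
- rewrite -!EFinD -EFinM lte_fin => h; exists a; split => //.
  move: h; rewrite ltr_pdivrMr // mulrC; lra.
- by rewrite gt0_mulye ?lte_fin ?invr_gt0.
Qed.

Lemma zero_witness (R : realType) m k (A : 'I_k -> 'rV[R]_m) (c b : 'I_k -> R)
  (g : 'rV[R]_m -> \bar R) zb lamb k1 k2 e :
  epirep A c b g -> subdiff g zb lamb ->
  Kp A c b g zb lamb k1 -> Kp A c b g zb lamb k2 -> 0 < e ->
  exists (x v w' : 'rV[R]_m) (t : R),
    [/\ 0 < t < e, `|w' - (k1 - k2)| < e, `|x - zb| < e & `|v - lamb| < e] /\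
    [/\ subdiff g x v, `|fine (g x) - fine (g zb)| < e & 0%E = diffquot2 g x v t w'].
Proof.
move=> Hepi Hsub K1 K2 e0.
have [gzf Hs] := Hsub.
have [tau1 tau10 Ht1] := ray_exact Hepi Hsub K1.
have [tau2 tau20 Ht2] := ray_exact Hepi Hsub K2.
set gz := fine (g zb).
have gzE : g zb = gz%:E by rewrite fineK.
set L := 1 + `|k2| + `|dotv lamb k2|.
have L1 : 1 <= L by rewrite /L -addrA lerDl addr_ge0.
pose t := Order.min (Order.min tau1 tau2) (e / L) / 2.
have eL : 0 < e / L by rewrite divr_gt0 // (lt_le_trans ltr01).
have mt : 0 < Order.min (Order.min tau1 tau2) (e / L) by rewrite !lt_min tau10 tau20 eL.
have t0 : 0 < t by rewrite divr_gt0.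
have tm : t < Order.min (Order.min tau1 tau2) (e / L) by rewrite /t; lra.
move: (tm); rewrite !lt_min => /andP[/andP[tt1 tt2] teL].
have tL : t * L < e by rewrite -ltr_pdivlMr // (lt_le_trans ltr01).
have tL' : t * L = t + t * `|k2| + t * `|dotv lamb k2| by rewrite /L; ring.
have tk2 : 0 <= t * `|k2| by rewrite mulr_ge0 // ltW.
have tl2 : 0 <= t * `|dotv lamb k2| by rewrite mulr_ge0 // ltW.
have gxE := Ht2 t t0 tt2; rewrite -/gz in gxE.
exists (zb + t *: k2), lamb, (k1 - k2), t; split; first split.
- by rewrite t0 /=; lra.
- by rewrite subrr normr0.
- by rewrite addrAC subrr add0r normrZ gtr0_norm //; lra.
- by rewrite subrr normr0.
split.
- split; first by rewrite gxE.
  move=> y; have := Hs y; rewrite gxE gzE -!EFinD.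
  rewrite (dotvBr lamb y (zb + t *: k2)) dotvDr dotvZr dotvBr => h; apply: le_trans h; rewrite lee_fin; lra.
- by rewrite gxE /= -/gz addrAC subrr add0r normrM gtr0_norm //; lra.
- rewrite /diffquot2.
  have -> : (zb + t *: k2 + t *: (k1 - k2))%R = (zb + t *: k1)%R.
    by rewrite scalerBr addrCA addrK addrC.
  rewrite (Ht1 t t0 tt1) -/gz gxE -!EFinB -EFinM; congr EFin.
  rewrite dotvBr; ring.
Qed.

Definition Mult (R : realType) m k (A : 'I_k -> 'rV[R]_m) (c : 'I_k -> R)
  (lamb : 'rV[R]_m) (J : {set 'I_k}) :=
  exists mu : 'I_k -> R, [/\ forall i, 0 <= mu i, forall i, i \notin J -> mu i = 0 &
    forall u r, dotv lamb u - r = \sum_i mu i * (dotv (A i) u + c i * r)].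

Lemma mult_or_sep (R : realType) m k (A : 'I_k -> 'rV[R]_m) (c : 'I_k -> R)
  (lamb : 'rV[R]_m) (J : {set 'I_k}) :
  Mult A c lamb J \/ exists u r, (forall i, i \in J -> dotv (A i) u + c i * r <= 0) /\
    r < dotv lamb u.
Proof.
case: (pselect (exists u r, (forall i, i \in J -> dotv (A i) u + c i * r <= 0) /\
    r < dotv lamb u)) => [h|h]; [by right | left].
pose a (i : nat) (p : ('rV[R]_m * R)%type) : R :=
  match (insub i : option 'I_k) with
  | Some j => if j \in J then - (dotv (A j) p.1 + c j * p.2) else 0
  | None => 0 end.
pose bb (p : ('rV[R]_m * R)%type) : R := p.2 - dotv lamb p.1.
have la : forall i, linf (a i).
  move=> i x y al; rewrite /a; case: (insub i) => [j|]; last by rewrite mulr0 subr0.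
  case: ifP => _; last by rewrite mulr0 subr0.
  rewrite /= dotvBr dotvZr -[al *: y.2]/(al * y.2); ring.
have lb : linf bb by move=> x y al; rewrite /bb /= dotvBr dotvZr -[al *: y.2]/(al * y.2); ring.
have hf : forall p, (forall i, (i < k)%N -> 0 <= a i p) -> 0 <= bb p.
  move=> [u r] hp; rewrite /bb /= subr_ge0 leNgt; apply/negP => hlt; apply: h.
  exists u, r; split => // i iJ; have := hp i (ltn_ord i).
  by rewrite /a valK iJ /= oppr_ge0.
have [mu [mu0 Hmu]] := @farkas _ _ _ _ _ la lb hf.
exists (fun j : 'I_k => if j \in J then mu j else 0); split.
- by move=> i; case: ifP.
- by move=> i /negbTE ->.
move=> u r; have := Hmu (u, r); rewrite /bb /= => E.
rewrite -opprB E -sumrN; apply: eq_bigr => j _; rewrite /a valK.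
by case: ifP => _ /=; ring.
Qed.


Lemma strict_big (R : realType) m k (A : 'I_k -> 'rV[R]_m) (c b : 'I_k -> R)
  (g : 'rV[R]_m -> \bar R) zb lamb w j (M : R) :
  epirep A c b g -> (forall x, g x != -oo%E) -> subdiff g zb lamb ->
  I0 A c b g zb j ->
  (forall u, Kp A c b g zb lamb u -> dotv (A j + c j *: lamb) u = 0) ->
  0 < dotv (A j + c j *: lamb) w ->
  exists2 e, 0 < e & forall (x v w' : 'rV[R]_m) (t : R),
    [/\ 0 < t < e, `|w' - w| < e, `|x - zb| < e & `|v - lamb| < e] ->
    subdiff g x v -> (M%:E <= diffquot2 g x v t w')%E.
Proof.
move=> Hepi Hnm Hsub Ij HE Hpos.
have [gzf Hs] := Hsub.
set gz := fine (g zb).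
pose Iset x : {set 'I_k} := finset (fun i : 'I_k => dotv (A i) x + c i * fine (g x) == b i).
have H1 : forall J : {set 'I_k}, exists2 e, 0 < e & forall e', 0 < e' -> e' < e ->
   forall x v, `|v - lamb| < e' -> subdiff g x v -> Iset x = J -> Mult A c lamb J.
  move=> J; case: (mult_or_sep A c lamb J) => [hm|[u [r [hJ hr]]]].
    by exists 1 => // *.
  pose eta := dotv lamb u - r.
  have eta0 : 0 < eta by rewrite subr_gt0.
  exists (eta / (2 * (m%:R * `|u| + 1))).
    by rewrite divr_gt0 // mulr_gt0 // ltr_wpDl // mulr_ge0.
  move=> e' e'0 e'lt x v hv hsx hI; exfalso.
  have hvu : dotv v u <= r.
    apply: (subgrad_active Hepi hsx) => i hi; apply: hJ; rewrite -hI inE; apply/eqP.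
    exact: hi.
  have hb := dotv_bound (v - lamb) u; rewrite dotvBl in hb.
  have hb2 : m%:R * `|v - lamb| * `|u| <= eta / 2.
    have : m%:R * `|v - lamb| * `|u| <= m%:R * `|u| * (eta / (2 * (m%:R * `|u| + 1))).
      rewrite mulrAC; apply: ler_wpM2l; first by rewrite mulr_ge0.
      by apply: ltW; apply: lt_trans hv e'lt.
    move=> h; apply: le_trans h _; apply: div_bound; [by rewrite mulr_ge0 | exact: ltW | by []].
  move: (le_trans hb hb2); rewrite ler_norml => /andP[h1 h2].
  have : eta = dotv lamb u - r by [].
  lra.
have [e1 e10 He1] := @fin_small R _ _ H1.
set Gj := A j + c j *: lamb.
set gam := dotv Gj w.
set K2 := m%:R * (`|w| + 1) + m%:R * `|lamb| + `|M|.
set C := m%:R * `|A j| + `|c j| * K2.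
have K20 : 0 <= K2 by rewrite /K2 !addr_ge0 // mulr_ge0 // addr_ge0.
have C0 : 0 <= C by rewrite /C addr_ge0 // mulr_ge0.
pose e2 := gam / (2 * (C + 1)).
have e20 : 0 < e2 by rewrite divr_gt0 // mulr_gt0 // ltr_wpDl.
have Ce2 : C * e2 <= gam / 2 by apply: div_bound => //; exact: ltW.
pose e := Order.min (Order.min (e1 / 2) e2) 1.
have e0 : 0 < e by rewrite !lt_min e20 ltr01 divr_gt0.
have ee1 : e < e1.
  apply: (le_lt_trans (y := e1 / 2)); last by lra.
  by rewrite /e !ge_min lexx.
have ee2 : e <= e2 by rewrite /e !ge_min lexx orbT.
have e1' : e <= 1 by rewrite /e !ge_min lexx orbT.
exists e => // x v w' t [/andP[t0 te] hw hx hv] hsx.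
rewrite leNgt; apply/negP => hq.
have [mu [mu0 muJ muid]] := He1 e e0 ee1 (Iset x) x v hv hsx erefl.
have [gxf Hsx] := hsx.
have hx1 : dotv lamb x - fine (g x) = \sum_i mu i * b i.
  rewrite muid; apply: eq_bigr => i _; case: (boolP (i \in Iset x)) => hi.
    by move: hi; rewrite inE => /eqP ->.
  by rewrite (muJ i hi) !mul0r.
have hz1 : dotv lamb zb - gz <= \sum_i mu i * b i.
  rewrite muid; apply: ler_sum => i _; apply: ler_wpM2l => //.
  have : (g zb <= gz%:E)%E by rewrite fineK.
  by move/Hepi; apply.
have hs1 : gz + dotv lamb (x - zb) <= fine (g x).
  by have := Hs x; rewrite -(fineK gzf) -(fineK gxf) -EFinD lee_fin.
have hgx : fine (g x) = gz + dotv lamb x - dotv lamb zb.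
  by rewrite dotvBr in hs1; lra.
have Ky : Kp A c b g zb lamb (x - zb).
  move=> i Ii; rewrite dotvG !dotvBr.
  have hxall : forall i', dotv (A i') x + c i' * fine (g x) <= b i' by apply/Hepi; rewrite fineK.
  have hxi := hxall i.
  rewrite /I0 -/gz in Ii.
  have : c i * fine (g x) = c i * gz + c i * (dotv lamb x - dotv lamb zb) by rewrite hgx; ring.
  lra.
have Hj0 := HE _ Ky; rewrite dotvG !dotvBr in Hj0.
have [a [ga alt]] := dq_lt hsx t0 (Hnm _) hq.
have hc : dotv (A j) (x + t *: w') + c j * (fine (g x) + t * dotv v w' + t ^+ 2 / 2 * M) <= b j.
  have : (g (x + t *: w')%R <= (fine (g x) + t * dotv v w' + t ^+ 2 / 2 * M)%:E)%E.
    by rewrite ga lee_fin ltW.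
  by move/Hepi; apply.
rewrite dotvDr dotvZr hgx in hc.
rewrite /I0 -/gz in Ij.
set Phi := dotv (A j) w' + c j * dotv v w' + c j * (t * M / 2).
have E1 : t * Phi = (dotv (A j) x + t * dotv (A j) w' + c j * (gz + dotv lamb x - dotv lamb zb + t * dotv v w' + t ^+ 2 / 2 * M)) - b j - (dotv (A j) x - dotv (A j) zb + c j * (dotv lamb x - dotv lamb zb)).
  by rewrite -Ij /Phi; ring.
have tPhi : t * Phi <= 0 by rewrite E1 Hj0; lra.
have Phi0 : Phi <= 0 by move: tPhi; rewrite pmulr_rle0.
set Z := dotv (v - lamb) w' + dotv lamb (w' - w) + t * M / 2.
have gamE : gam = dotv (A j) w + c j * dotv lamb w by rewrite /gam /Gj dotvG.
have PhiE : Phi = gam + dotv (A j) (w' - w) + c j * Z.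
  by rewrite gamE /Phi /Z !dotvBr dotvBl; ring.
have nw' : `|w'| <= `|w| + 1.
  have -> : w' = w + (w' - w) by rewrite addrC subrK.
  apply: (le_trans (ler_normD _ _)); rewrite lerD2l; apply: ltW.
  exact: lt_le_trans hw e1'.
have b1 : `|dotv (v - lamb) w'| <= m%:R * (`|w| + 1) * e.
  apply: (le_trans (dotv_bound _ _)).
  rewrite mulrAC [X in _ <= X]mulrAC -!mulrA; apply: ler_wpM2l => //; rewrite mulrC.
  apply: ler_pM => //; exact: ltW.
have b2 : `|dotv lamb (w' - w)| <= m%:R * `|lamb| * e.
  apply: (le_trans (dotv_bound _ _)); apply: ler_wpM2l; first by rewrite mulr_ge0.
  exact: ltW.
have b3 : `|t * M / 2| <= `|M| * e.
  rewrite normrM normrM (gtr0_norm t0) [X in _ * X]gtr0_norm ?invr_gt0 //.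
  have : 0 <= `|M| by [].
  have : t * `|M| <= e * `|M| by apply: ler_wpM2r => //; exact: ltW.
  rewrite [`|M| * e]mulrC => h1 h2; have : t * `|M| / 2 = (t * `|M|) * (1/2) by rewrite mul1r.
  move=> ->; nra.
have bZ : `|Z| <= e * K2.
  apply: (le_trans (ler_normD _ _)); apply: (le_trans (lerD (ler_normD _ _) (lexx _))).
  have -> : e * K2 = m%:R * (`|w| + 1) * e + m%:R * `|lamb| * e + `|M| * e by rewrite /K2; ring.
  by apply: lerD; [apply: lerD|].
have bcZ : `|c j * Z| <= `|c j| * (e * K2).
  by rewrite normrM; apply: ler_wpM2l.
have bA : `|dotv (A j) (w' - w)| <= m%:R * `|A j| * e.
  apply: (le_trans (dotv_bound _ _)); apply: ler_wpM2l; first by rewrite mulr_ge0.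
  exact: ltW.
have bC : C * e <= gam / 2.
  apply: le_trans Ce2; apply: ler_wpM2l => //.
have CeE : C * e = m%:R * `|A j| * e + `|c j| * (e * K2) by rewrite /C; ring.
move: bcZ bA; rewrite !ler_norml => /andP[h1 h2] /andP[h3 h4].
have : 0 < gam by [].
lra.
Qed.

Unset Implicit Arguments.
Lemma ereal_all_pinfty (R : realType) (X : \bar R) :
  (forall M : R, (M%:E <= X)%E) -> X = +oo%E.
Proof.
case: X => [r | | ] h //.
  move: (h (r + 1)%R); rewrite lee_fin => h'; exfalso; lra.
by have := h 0.
Qed.

Theorem proposition4p1 (R : realType) (m : nat) (g : 'rV[R]_m -> \bar R)
    (zb lamb : 'rV[R]_m) :
  polyhedral_fun g -> subdiff g zb lamb ->
  forall w : 'rV[R]_m,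
    strict_second_subderiv g zb lamb w
    = indicator (set_minus_self (crit_cone g zb lamb)) w.
Proof.
move=> Hpoly Hsub w.
have [[Hnm _] _] := Hpoly.
have [k [A [c [b Hepi]]]] := epi_of_poly Hpoly.
have Hcrit : crit_cone g zb lamb = Kp A c b g zb lamb.
  by apply/seteqP; split => u; [exact: crit_sub | exact: crit_sup].
rewrite Hcrit.
have := cone_span (fun i => A i + c i *: lamb) (I0 A c b g zb) w.
move=> /= [[u1 K1 [u2 K2 Hw]] | [j [Ij HE Hpos]]].
- rewrite /indicator asboolT; last by exists u1 => //; exists u2.
  apply/le_anti/andP; split.
    apply/ereal_supP => y [e e0 <-]; apply: ereal_inf_lbound.
    rewrite -Hw; exact: zero_witness Hepi Hsub K1 K2 e0.
  rewrite /strict_second_subderiv; apply: le_trans; last first.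
    by apply: ereal_sup_ubound; exists 1; [exact: ltr01 | by []].
  apply/ereal_infP => y [x [v [w' [t [[/andP[t0 _] _ _ _] [hs _ ->]]]]]].
  exact: dq_ge0 hs t0.
- rewrite /indicator asboolF; last first.
    move=> [u1 K1 [u2 K2 Hw]]; have := HE _ K1; have := HE _ K2.
    move: Hpos; rewrite -Hw dotvBr => hp h2 h1; move: hp; rewrite h1 h2 subrr ltxx. by [].
  apply: ereal_all_pinfty => M.
  have [e e0 He] := strict_big M Hepi Hnm Hsub Ij HE Hpos.
  rewrite /strict_second_subderiv; apply: le_trans; last first.
    by apply: ereal_sup_ubound; exists e.
  apply/ereal_infP => y [x [v [w' [t [H1 [hs _ ->]]]]]].
  exact: He H1 hs.
Qed.
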